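(* Let $h:\mathbb{R}\to\mathbb{R}$ be of class $C^2$. Let $\mathcal{H}_0=\{(x,\varPhi)\in\mathbb{R}^2 \mid \varPhi>0,\ \varPhi^2\neq h(x)\}$ and equip it with the Riemannian metric \[ g_h=\frac{\left(h(x)-\varPhi^2\right)^2dx^2+d\varPhi^2}{\varPhi^2}. \] Then on the whole domain $\mathcal{H}_0$ the metric $g_h$ has constant sectional curvature equal to $-1$; i.e., it everywhere describes hyperbolic geometry.
   Context: $\mathcal{H}=\{(x,\varPhi)\in\mathbb{R}^2\mid \varPhi>0\}$ is the upper half plane. The expression for $g_h$ is degenerate exactly where $\varPhi^2=h(x)$, which is why these points are removed; the Riemannian manifold $\mathbb{M}_h=(\mathcal{H}_0,g_h)$ is called the Linear-$2^{\mathrm{nd}}$-order-ODE upper half plane. *)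

(* Defs.v *)
From Stdlib Require Import Reals Lra.
From Coquelicot Require Import Coquelicot.
Open Scope R_scope.

(* A metric tensor on (an open subset of) R^2 in coordinates (x0, x1):
   g i j x0 x1, for indices i j in {0,1}. *)
Definition metric2 := nat -> nat -> R -> R -> R.

Definition sum2 (f : nat -> R) : R := f 0%nat + f 1%nat.

Definition pd (i : nat) (f : R -> R -> R) (x y : R) : R :=
  match i with
  | 0%nat => Derive (fun t => f t y) x
  | _ => Derive (fun t => f x t) y
  end.

Definition gdet (g : metric2) (x y : R) : R :=
  g 0%nat 0%nat x y * g 1%nat 1%nat x y - g 0%nat 1%nat x y * g 1%nat 0%nat x y.

Definition ginv (g : metric2) (k l : nat) (x y : R) : R :=
  match k, l with
  | 0%nat, 0%nat => g 1%nat 1%nat x y / gdet g x y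
  | 0%nat, _ => - g 0%nat 1%nat x y / gdet g x y
  | _, 0%nat => - g 1%nat 0%nat x y / gdet g x y
  | _, _ => g 0%nat 0%nat x y / gdet g x y
  end.

Definition christoffel (g : metric2) (k i j : nat) (x y : R) : R :=
  / 2 * sum2 (fun l => ginv g k l x y *
     (pd i (g j l) x y + pd j (g i l) x y - pd l (g i j) x y)).

(* Riemann tensor R^l_{ijk}, with R(d_i,d_j) d_k = R^l_{ijk} d_l and
   R(X,Y)Z = nabla_X nabla_Y Z - nabla_Y nabla_X Z - nabla_[X,Y] Z *)
Definition riemann (g : metric2) (l i j k : nat) (x y : R) : R :=
  pd i (christoffel g l j k) x y - pd j (christoffel g l i k) x y
  + sum2 (fun m => christoffel g m j k x y * christoffel g l i m x y
                   - christoffel g m i k x y * christoffel g l j m x y).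

(* Sectional curvature of the (unique) tangent 2-plane span(d_0, d_1):
   K = <R(d_0,d_1) d_1, d_0> / (g00 g11 - g01^2)  (= Gaussian curvature). *)
Definition sectional_curvature (g : metric2) (x y : R) : R :=
  sum2 (fun l => g 0%nat l x y * riemann g l 0%nat 1%nat 1%nat x y) / gdet g x y.

Definition g_h (h : R -> R) : metric2 := fun i j x p =>
  match i, j with
  | 0%nat, 0%nat => (h x - p ^ 2) ^ 2 / p ^ 2
  | 1%nat, 1%nat => 1 / p ^ 2
  | _, _ => 0
  end.

(* Main.v *)
Require Import Defs.
From Stdlib Require Import Reals.
From Coquelicot Require Import Coquelicot.
From Stdlib Require Import Lra.
Open Scope R_scope.

Section S.
Variable h : R -> R.

Lemma pd_g01 i x y : pd i (g_h h 0%nat 1%nat) x y = 0.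
Proof. destruct i; unfold pd, g_h; apply Derive_const. Qed.
Lemma pd_g10 i x y : pd i (g_h h 1%nat 0%nat) x y = 0.
Proof. destruct i; unfold pd, g_h; apply Derive_const. Qed.
Lemma pd0_g11 x y : pd 0%nat (g_h h 1%nat 1%nat) x y = 0.
Proof. unfold pd, g_h; apply Derive_const. Qed.
Lemma pd1_g11 x y : y <> 0 -> pd 1%nat (g_h h 1%nat 1%nat) x y = -2 / y^3.
Proof.
  intros Hy. unfold pd, g_h.
  apply is_derive_unique. auto_derive; [auto|field; auto].
Qed.
Lemma pd1_g00 x y : y <> 0 -> pd 1%nat (g_h h 0%nat 0%nat) x y =
  (2*(h x - y^2)*(-2*y)*y^2 - (h x - y^2)^2*(2*y)) / (y^2)^2.
Proof.
  intros Hy. unfold pd, g_h.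
  apply is_derive_unique. auto_derive; [auto|field; auto].
Qed.

Lemma gdet_eq x y : y <> 0 -> gdet (g_h h) x y = (h x - y^2)^2/(y^2*y^2).
Proof. intros; unfold gdet; simpl; field; auto. Qed.

Lemma G011 x y : christoffel (g_h h) 0%nat 1%nat 1%nat x y = 0.
Proof.
  unfold christoffel, sum2, ginv.
  rewrite ?pd_g10, ?pd_g01, ?pd0_g11. simpl. unfold Rdiv. ring.
Qed.

Lemma G001 x y : y <> 0 -> h x - y^2 <> 0 ->
  christoffel (g_h h) 0%nat 0%nat 1%nat x y = -2*y/(h x - y^2) - 1/y.
Proof.
  intros Hy Hu.
  unfold christoffel, sum2, ginv.
  rewrite pd1_g00, ?pd_g10, ?pd_g01; auto. rewrite gdet_eq; auto. simpl g_h.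
  field; repeat split; auto.
Qed.

Lemma G010 x y : y <> 0 -> h x - y^2 <> 0 ->
  christoffel (g_h h) 0%nat 1%nat 0%nat x y = -2*y/(h x - y^2) - 1/y.
Proof.
  intros Hy Hu.
  unfold christoffel, sum2, ginv.
  rewrite pd1_g00, ?pd_g10, ?pd_g01; auto. rewrite gdet_eq; auto. simpl g_h.
  field; repeat split; auto.
Qed.

Lemma G111 x y : y <> 0 -> h x - y^2 <> 0 ->
  christoffel (g_h h) 1%nat 1%nat 1%nat x y = -1/y.
Proof.
  intros Hy Hu.
  unfold christoffel, sum2, ginv.
  rewrite pd1_g11, ?pd_g10, ?pd_g01, ?pd0_g11; auto. rewrite gdet_eq; auto. simpl g_h.
  field; repeat split; auto.
Qed.

End S.

Theorem lemma2p3 (h : R -> R)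
  (h_d1 : forall x, ex_derive h x)
  (h_d2 : forall x, ex_derive (Derive h) x)
  (h_c2 : forall x, continuous (Derive (Derive h)) x) :
  forall x Phi : R, 0 < Phi -> Phi ^ 2 <> h x ->
    sectional_curvature (g_h h) x Phi = -1.
Proof.
  intros x Phi HP Hne.
  assert (Hy : Phi <> 0) by lra.
  assert (Hu : h x - Phi^2 <> 0) by lra.
  assert (Hloc : locally Phi (fun t => christoffel (g_h h) 0%nat 0%nat 1%nat x t
                    = -2*t/(h x - t^2) - 1/t)).
  { assert (L1 : locally Phi (fun t : R => 0 < t)) by (apply open_gt; auto).
    assert (Hc : continuity_pt (fun t => h x - t^2) Phi) by (reg).
    destruct (proj1 (continuity_pt_locally _ _) Hc
                (mkposreal (Rabs (h x - Phi^2)) (Rabs_pos_lt _ Hu))) as [d Hd].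
    destruct L1 as [d1 Hd1].
    exists (mkposreal _ (Rmin_pos _ _ (cond_pos d) (cond_pos d1))).
    intros t Ht.
    assert (Bd : ball Phi d t).
    { eapply ball_le; [apply Rmin_l|exact Ht]. }
    assert (Bd1 : ball Phi d1 t).
    { eapply ball_le; [apply Rmin_r|exact Ht]. }
    specialize (Hd t Bd). specialize (Hd1 t Bd1). cbv beta in Hd, Hd1.
    apply G001; [lra|].
    intro E. rewrite E in Hd.
    replace (0 - (h x - Phi^2)) with (- (h x - Phi^2)) in Hd by ring.
    rewrite Rabs_Ropp in Hd. simpl pos in Hd. exact (Rlt_irrefl _ Hd). }
  assert (HD : pd 1%nat (christoffel (g_h h) 0%nat 0%nat 1%nat) x Phi =
     -2/(h x - Phi^2) - 4*Phi^2/(h x - Phi^2)^2 + 1/Phi^2).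
  { unfold pd. erewrite Derive_ext_loc; [|exact Hloc].
    apply is_derive_unique. auto_derive.
    - split; [auto|split; auto].
    - field. split; auto. }
  assert (HD0 : pd 0%nat (christoffel (g_h h) 0%nat 1%nat 1%nat) x Phi = 0).
  { unfold pd. rewrite (Derive_ext _ (fun _ => 0)). apply Derive_const.
    intro; apply G011. }
  unfold sectional_curvature, riemann, sum2.
  rewrite HD, HD0, !G011, G001, G010, G111; auto.
  unfold gdet. simpl g_h.
  field; repeat split; auto.
Qed.
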